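(* Let $S\subset\mathbb{R}^2$ be a finite set in general position and let $a,b\in S$. If $ab$ is an exit edge of $S$ with two distinct witnesses $c,d\in S$, then in the dual arrangement $\mathcal{A}$ of $S^*$ the two unmarked triangular cells bounded by $a^*,b^*,c^*$ and by $a^*,b^*,d^*$ both have exit vertex $a^*\cap b^*$, i.e. they form an hourglass.
   Context: General position: no three points collinear. For distinct $a,b,c\in S$, $ab$ is an exit edge with witness $c$ if there is no $p\in S$ such that the line through $a$ and $p$ strictly separates $b$ from $c$, and no $p\in S$ such that the line through $b$ and $p$ strictly separates $a$ from $c$. Duality: $p=(p_x,p_y)\mapsto p^*: y=p_xx-p_y$, lines in the projective plane $\mathbb{P}^2$; $\mathcal{A}$ is the arrangement of $S^*=\{s^*:s\in S\}$. The marked cell is the cell containing the vertical point at infinity. Lines are oriented in the direction of increasing $x$; for an unmarked triangular cell, the exit vertex is the unique vertex at which one incident side is directed into it and the other out of it. An hourglass is a pair of distinct unmarked triangular cells with the same exit vertex. *)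

(* Defs.v *)
From Stdlib Require Import Reals List.
Open Scope R_scope.

Definition point := (R * R)%type.

(* Orientation determinant of (p, q, r): zero iff collinear; its sign tells
   on which side of the (oriented) line pq the point r lies. *)
Definition orient (p q r : point) : R :=
  (fst q - fst p) * (snd r - snd p) - (snd q - snd p) * (fst r - fst p).

Definition general_position (S : list point) : Prop :=
  forall p q r, In p S -> In q S -> In r S ->
    p <> q -> q <> r -> p <> r -> orient p q r <> 0.

Definition strictly_separates (u p x y : point) : Prop :=
  u <> p /\ orient u p x * orient u p y < 0.

Definition exit_edge_witness (S : list point) (a b c : point) : Prop :=
  In a S /\ In b S /\ In c S /\ a <> b /\ b <> c /\ a <> c /\
  ~ (exists p, In p S /\ strictly_separates a p b c) /\
  ~ (exists p, In p S /\ strictly_separates b p a c).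

(* Homogeneous coordinates [X : Y : W] of P^2; the affine point (x, y)
   is [x : y : 1]; a point of P^2 is a nonzero vector up to nonzero scaling.
   All predicates below on vectors are invariant under nonzero scaling. *)
Record vec3 := V3 { vX : R; vY : R; vW : R }.

Definition vzero : vec3 := V3 0 0 0.
Definition vadd (u v : vec3) : vec3 := V3 (vX u + vX v) (vY u + vY v) (vW u + vW v).
Definition vscale (k : R) (v : vec3) : vec3 := V3 (k * vX v) (k * vY v) (k * vW v).

(* The dual line p^dual : y = p_x x - p_y, in homogeneous form
   p_x X - Y - p_y W = 0.  [dual_form p v] is the defining linear form. *)
Definition dual_form (p : point) (v : vec3) : R :=
  fst p * vX v - vY v - snd p * vW v.

Definition off_lines (S : list point) (v : vec3) : Prop :=
  v <> vzero /\ forall s, In s S -> dual_form s v <> 0.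

(* A "region" is a set of points of P^2, given as a scaling-invariant
   predicate on vectors. *)
Definition region := vec3 -> Prop.

(* The cell of the arrangement A of S^dual containing the point [v0]
   (v0 off all lines): the points [v] off all lines which are not separated
   from [v0] by any line of S^dual, i.e. whose sign vector w.r.t. the forms
   (dual_form s)_{s in S} agrees with that of v0 up to a global sign. *)
Definition cell_of (S : list point) (v0 : vec3) : region :=
  fun v => off_lines S v /\
    exists e, (e = 1 \/ e = -1) /\
      forall s, In s S -> 0 < e * dual_form s v * dual_form s v0.

Definition is_cell (S : list point) (C : region) : Prop :=
  exists v0, off_lines S v0 /\ forall v, C v <-> cell_of S v0 v.

(* The marked cell: the cell containing the vertical point at infinity [0:1:0]. *)
Definition marked (C : region) : Prop := C (V3 0 1 0).

(* [w] is a point in the relative interior of the side (edge) of cell C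
   lying on the line s^dual: w is on s^dual, on no other line of S^dual, and no other
   line of S^dual separates it from the cell C. *)
Definition edge_point (S : list point) (C : region) (s : point) (w : vec3) : Prop :=
  w <> vzero /\ dual_form s w = 0 /\
  (forall t, In t S -> t <> s -> dual_form t w <> 0) /\
  exists v0, C v0 /\ exists e, (e = 1 \/ e = -1) /\
    forall t, In t S -> t <> s -> 0 < e * dual_form t w * dual_form t v0.

Definition is_side (S : list point) (C : region) (s : point) : Prop :=
  In s S /\ exists w, edge_point S C s w.

Definition triangular_cell (S : list point) (C : region) (a b c : point) : Prop :=
  is_cell S C /\ a <> b /\ b <> c /\ a <> c /\
  forall s, is_side S C s <-> (s = a \/ s = b \/ s = c).

(* Orientation of lines by increasing x: moving from [v] in direction t, the
   affine x-coordinate X/W increases, i.e. d/dh (X/W)(v + h t) at h = 0 has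
   numerator W*tX - X*tW > 0 (this expression also gives the orientation
   through the points at infinity, by continuity on the projective line). *)
Definition x_increasing (v t : vec3) : Prop := 0 < vW v * vX t - vX v * vW t.
Definition x_decreasing (v t : vec3) : Prop := vW v * vX t - vX v * vW t < 0.

Definition side_leaves (S : list point) (C : region) (s : point) (v t : vec3) : Prop :=
  dual_form s t = 0 /\
  exists h0, 0 < h0 /\
    forall h, 0 < h < h0 -> edge_point S C s (vadd v (vscale h t)).

Definition side_out (S : list point) (C : region) (s : point) (v : vec3) : Prop :=
  exists t, side_leaves S C s v t /\ x_increasing v t.
Definition side_in (S : list point) (C : region) (s : point) (v : vec3) : Prop :=
  exists t, side_leaves S C s v t /\ x_decreasing v t.

Definition mixed_vertex (S : list point) (C : region) (a b : point) : Prop :=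
  exists v, v <> vzero /\ dual_form a v = 0 /\ dual_form b v = 0 /\
    ((side_in S C a v /\ side_out S C b v) \/
     (side_out S C a v /\ side_in S C b v)).

(* C is a triangular cell whose exit vertex is a^dual ∩ b^dual: the vertex
   a^dual ∩ b^dual is the unique vertex of the triangle with one incident side
   directed in and the other out. *)
Definition exit_vertex_is (S : list point) (C : region) (a b : point) : Prop :=
  exists c, triangular_cell S C a b c /\
    mixed_vertex S C a b /\ ~ mixed_vertex S C a c /\ ~ mixed_vertex S C b c.

Definition hourglass (S : list point) (C1 C2 : region) : Prop :=
  (exists v, ~ (C1 v <-> C2 v)) /\ ~ marked C1 /\ ~ marked C2 /\
  exists a b, In a S /\ In b S /\ a <> b /\
    exit_vertex_is S C1 a b /\ exit_vertex_is S C2 a b.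

(* Main.v *)
Require Import Defs.
From Stdlib Require Import Reals List Lra Psatz Classical.
Open Scope R_scope.

Definition LA (s:point) : vec3 := V3 (fst s) (-1) (- snd s).
Definition cross (u v : vec3) := V3 (vY u * vW v - vW u * vY v) (vW u * vX v - vX u * vW v) (vX u * vY v - vY u * vX v).
Definition br (v t : vec3) := vW v * vX t - vX v * vW t.
Lemma ident (a b c s : point) v : orient a b c * dual_form s v = dual_form a v * orient b c s + dual_form b v * orient c a s + dual_form c v * orient a b s.
Proof. destruct a, b, c, s, v; unfold orient, dual_form; simpl; ring. Qed.
Lemma f_cross a b s : dual_form s (cross (LA a) (LA b)) = - orient a b s.
Proof. destruct a, b, s; unfold orient, dual_form; simpl; ring. Qed.
Lemma br_cross s r t : br (cross (LA s) (LA r)) t = dual_form r t - dual_form s t.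
Proof. destruct s, r, t; unfold br, dual_form; simpl; ring. Qed.
Lemma conc_X a b c v : orient a b c * vX v = - (dual_form a v * vX (cross (LA b) (LA c)) + dual_form b v * vX (cross (LA c) (LA a)) + dual_form c v * vX (cross (LA a) (LA b))).
Proof. destruct a, b, c, v; unfold orient, dual_form; simpl; ring. Qed.
Lemma conc_Y a b c v : orient a b c * vY v = - (dual_form a v * vY (cross (LA b) (LA c)) + dual_form b v * vY (cross (LA c) (LA a)) + dual_form c v * vY (cross (LA a) (LA b))).
Proof. destruct a, b, c, v; unfold orient, dual_form; simpl; ring. Qed.
Lemma conc_W a b c v : orient a b c * vW v = - (dual_form a v * vW (cross (LA b) (LA c)) + dual_form b v * vW (cross (LA c) (LA a)) + dual_form c v * vW (cross (LA a) (LA b))).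
Proof. destruct a, b, c, v; unfold orient, dual_form; simpl; ring. Qed.
Lemma f_dcross s r : dual_form r (cross (LA s) (cross (LA s) (LA r))) = - (let c := cross (LA s) (LA r) in vX c * vX c + vY c * vY c + vW c * vW c).
Proof. destruct s, r; unfold dual_form; simpl; ring. Qed.
Lemma f_dcross0 s r : dual_form s (cross (LA s) (cross (LA s) (LA r))) = 0.
Proof. destruct s, r; unfold dual_form; simpl; ring. Qed.

Lemma list_min_pos (l : list point) (P : point -> Prop) (g : point -> R) :
  (forall s, In s l -> P s -> 0 < g s) ->
  exists h, 0 < h /\ forall s, In s l -> P s -> h <= g s.
Proof.
  induction l as [|x l IH]; intros H.
  - exists 1; split; [lra|]. intros s [].
  - destruct IH as [h [Hh Hl]]. { intros s Hs; apply H; right; auto. }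
    destruct (classic (P x)) as [Px|Px].
    + exists (Rmin h (g x)). split.
      * apply Rmin_pos; auto. apply H; simpl; auto.
      * intros s [<-|Hs] Ps. apply Rmin_r. eapply Rle_trans; [apply Rmin_l|]; auto.
    + exists h; split; auto. intros s [<-|Hs] Ps; [contradiction|auto].
Qed.

Lemma list_argmin (l : list point) (P : point -> Prop) (g : point -> R) :
  (exists s, In s l /\ P s) ->
  exists s, In s l /\ P s /\ forall s', In s' l -> P s' -> g s <= g s'.
Proof.
  induction l as [|x l IH]; intros [s0 [Hs0 Ps0]]; [destruct Hs0|].
  destruct (classic (exists s, In s l /\ P s)) as [E|NE].
  - destruct (IH E) as [m [Hm [Pm Hmin]]].
    destruct (classic (P x /\ g x <= g m)) as [[Px Hx]|N].
    + exists x; split; [left; auto|split; auto].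
      intros s' [<-|Hs'] Ps'; [lra|]. specialize (Hmin s' Hs' Ps'); lra.
    + exists m; split; [right; auto|split; auto].
      intros s' [<-|Hs'] Ps'; auto.
      apply Rnot_lt_le; intro Hlt; apply N; split; auto; lra.
  - destruct Hs0 as [<-|Hs0]; [|exfalso; apply NE; eauto].
    exists x; split; [left; auto|split; auto].
    intros s' [<-|Hs'] Ps'; [lra|exfalso; apply NE; eauto].
Qed.
Notation f := dual_form.

Lemma pos_of_prod A B : 0 < A * B -> 0 < B -> 0 < A.
Proof. intros H HB. destruct (Rlt_or_le 0 A) as [|HA]; auto. nra. Qed.

Lemma concur a b c v : f a v = 0 -> f b v = 0 -> f c v = 0 -> orient a b c <> 0 -> v = vzero.
Proof.
  intros Ha Hb Hc Ho.
  pose proof (conc_X a b c v) as HX. pose proof (conc_Y a b c v) as HY. pose proof (conc_W a b c v) as HW.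
  rewrite Ha, Hb, Hc in HX, HY, HW.
  assert (vX v = 0) by (apply (Rmult_eq_reg_l (orient a b c)); auto; lra).
  assert (vY v = 0) by (apply (Rmult_eq_reg_l (orient a b c)); auto; lra).
  assert (vW v = 0) by (apply (Rmult_eq_reg_l (orient a b c)); auto; lra).
  destruct v; simpl in *; subst; reflexivity.
Qed.

Lemma vertex_param s r v : s <> r -> f s v = 0 -> f r v = 0 ->
  exists k, v = vscale k (cross (LA s) (LA r)).
Proof.
  destruct s as [sx sy], r as [rx ry], v as [X Y W]; unfold dual_form; simpl; intros Hne H1 H2.
  destruct (Req_dec rx sx) as [E|E].
  - subst rx. assert (ry - sy <> 0) by (intro; apply Hne; f_equal; lra).
    assert (W = 0) by (apply (Rmult_eq_reg_l (ry - sy)); auto; lra). subst W.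
    assert (Y = sx * X) by lra. subst Y.
    exists (X / (ry - sy)). unfold vscale, cross; simpl. f_equal; field; auto.
  - assert (rx - sx <> 0) by lra.
    assert (Y = sx * X - sy * W) by lra. subst Y.
    assert (X = W * (ry - sy) / (rx - sx)).
    { apply (Rmult_eq_reg_l (rx - sx)); auto. field_simplify; auto. lra. }
    subst X.
    exists (W / (rx - sx)). unfold vscale, cross; simpl. f_equal; field; auto.
Qed.

Lemma cross_nz s r : s <> r -> 0 < (let c := cross (LA s) (LA r) in vX c * vX c + vY c * vY c + vW c * vW c).
Proof.
  destruct s as [sx sy], r as [rx ry]; simpl; intros Hne.
  set (A := -1 * - ry - - sy * -1). set (B := - sy * rx - sx * - ry). set (Cc := sx * -1 - -1 * rx).
  assert (0 <= A * A) by nra. assert (0 <= B * B) by nra. assert (0 <= Cc * Cc) by nra.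
  destruct (Req_dec rx sx); destruct (Req_dec ry sy).
  - subst; contradiction.
  - assert (0 < A * A) by (apply Rsqr_pos_lt; unfold A; lra). lra.
  - assert (0 < Cc * Cc) by (apply Rsqr_pos_lt; unfold Cc; lra). lra.
  - assert (0 < Cc * Cc) by (apply Rsqr_pos_lt; unfold Cc; lra). lra.
Qed.

Lemma edge_ext S C C' s q : (forall v, C v <-> C' v) -> edge_point S C s q -> edge_point S C' s q.
Proof.
  intros E [H1 [H2 [H3 [v0 [Cv0 R]]]]]. repeat split; auto. exists v0; split; auto. apply E; auto.
Qed.

Lemma edge_rel S C s q x : edge_point S C s q -> (forall v, C v <-> cell_of S x v) ->
  exists e, (e = 1 \/ e = -1) /\ forall t, In t S -> t <> s -> 0 < e * f t q * f t x.
Proof.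
  intros [_ [_ [_ [v0 [Cv0 [e [He Hp]]]]]]] E.
  apply E in Cv0. destruct Cv0 as [_ [e0 [He0 H0]]].
  exists (e * e0); split. { destruct He as [->| ->]; destruct He0 as [->| ->]; lra. }
  intros t Ht Hts. specialize (Hp t Ht Hts). specialize (H0 t Ht).
  assert (Hsq : e0 * e0 = 1) by (destruct He0 as [->| ->]; lra).
  assert (0 < (e * f t q * f t v0) * (e0 * f t v0 * f t x)) by (apply Rmult_lt_0_compat; auto).
  assert (f t v0 <> 0) by (intro Z; rewrite Z in H0; lra).
  apply (pos_of_prod _ (f t v0 * f t v0)). 
  - replace (e * e0 * f t q * f t x * (f t v0 * f t v0)) with ((e * f t q * f t v0) * (e0 * f t v0 * f t x)) by ring. auto.
  - nra.
Qed.

Lemma f_lin s u h t : f s (vadd u (vscale h t)) = f s u + h * f s t.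
Proof. destruct s, u, t; unfold dual_form; simpl; ring. Qed.
Lemma f_scale s k t : f s (vscale k t) = k * f s t.
Proof. destruct s, t; unfold dual_form; simpl; ring. Qed.
Lemma f_comb s l x y : f s (vadd (vscale (1 - l) x) (vscale l y)) = (1 - l) * f s x + l * f s y.
Proof. destruct s, x, y; unfold dual_form; simpl; ring. Qed.
Lemma nz_of_f s v : f s v <> 0 -> v <> vzero.
Proof. intros H E; subst; apply H; destruct s; unfold dual_form; simpl; ring. Qed.

Lemma gp_concur S t1 t2 t p : general_position S -> In t1 S -> In t2 S -> In t S ->
  t1 <> t2 -> t <> t1 -> t <> t2 -> p <> vzero -> f t1 p = 0 -> f t2 p = 0 -> f t p <> 0.
Proof.
  intros G H1 H2 H3 n12 n1 n2 Hp E1 E2 E3. apply Hp. apply (concur t1 t2 t); auto.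
Qed.

Lemma crossing S x y s0 w0 :
  general_position S -> off_lines S x ->
  In s0 S -> 0 < f s0 x * f s0 y ->
  In w0 S -> f w0 x * f w0 y <= 0 ->
  exists t1 q, In t1 S /\ f t1 x * f t1 y <= 0 /\ edge_point S (cell_of S x) t1 q.
Proof.
  intros G [xnz Hx] Hs0 Ps0 Hw0 Pw0.
  set (P := fun t => f t x * f t y <= 0).
  set (g := fun t => f t x / (f t x - f t y)).
  destruct (list_argmin S P g) as [t1 [Ht1 [Pt1 Hmin]]]. { exists w0; split; auto. }
  set (lam := g t1).
  assert (KP : forall t, In t S -> P t -> 0 < f t x * (f t x - f t y) /\ f t x * f t x <= f t x * (f t x - f t y)).
  { intros t Ht Pt. unfold P in Pt. pose proof (Hx t Ht). assert (0 < f t x * f t x) by (apply Rsqr_pos_lt; auto). split; nra. }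
  assert (gE : forall t, In t S -> P t -> g t = f t x * f t x / (f t x * (f t x - f t y))).
  { intros t Ht Pt. destruct (KP t Ht Pt). pose proof (Hx t Ht). unfold g. field. split; auto. intro Z.
    assert (f t x * (f t x - f t y) = 0) by (rewrite Z; ring). lra. }
  assert (Hlam : 0 < lam <= 1).
  { unfold lam. rewrite gE; auto. destruct (KP t1 Ht1 Pt1). pose proof (Hx t1 Ht1).
    assert (0 < f t1 x * f t1 x) by (apply Rsqr_pos_lt; auto). split.
    - apply Rdiv_lt_0_compat; auto.
    - apply Rmult_le_reg_r with (f t1 x * (f t1 x - f t1 y)); auto. field_simplify; try lra. split; auto. intro Z; rewrite Z in H; lra. }
  set (p := vadd (vscale (1 - lam) x) (vscale lam y)).
  assert (fp : forall t, f t p = (1 - lam) * f t x + lam * f t y) by (intro; unfold p; apply f_comb).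
  assert (Hp1 : f t1 p = 0).
  { rewrite fp. unfold lam, g. destruct (KP t1 Ht1 Pt1). field. intro Z.
    assert (f t1 x * (f t1 x - f t1 y) = 0) by (rewrite Z; ring). lra. }
  assert (Hpx : forall t, In t S -> 0 <= f t p * f t x).
  { intros t Ht. rewrite fp. destruct (classic (P t)) as [Pt|Pt].
    - destruct (KP t Ht Pt) as [K1 K2]. specialize (Hmin t Ht Pt). fold lam in Hmin.
      assert (lam * (f t x * (f t x - f t y)) <= f t x * f t x).
      { apply Rmult_le_reg_r with (/ (f t x * (f t x - f t y))). apply Rinv_0_lt_compat; auto.
        pose proof (Hx t Ht). field_simplify; [unfold g in Hmin; exact Hmin| |]; split; auto; intro Z; rewrite Z in K1; lra. }
      nra.
    - unfold P in Pt. assert (0 < f t x * f t y) by lra. pose proof (Hx t Ht).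
      assert (0 < f t x * f t x) by (apply Rsqr_pos_lt; auto). nra. }
  assert (Hps0 : 0 < f s0 p * f s0 x).
  { rewrite fp. pose proof (Hx s0 Hs0). assert (0 < f s0 x * f s0 x) by (apply Rsqr_pos_lt; auto). nra. }
  assert (pnz : p <> vzero). { apply (nz_of_f s0). intro Z; rewrite Z in Hps0; lra. }
  assert (Hpos : forall t, In t S -> f t p <> 0 -> 0 < f t p * f t x).
  { intros t Ht Hn. destruct (Hpx t Ht) as [|E]; auto. exfalso. symmetry in E.
    apply Rmult_integral in E. destruct E; auto. apply (Hx t Ht); auto. }
  exists t1.
  destruct (classic (exists t2, In t2 S /\ t2 <> t1 /\ f t2 p = 0)) as [[t2 [Ht2 [n21 E2]]]|NE].
  - set (u := vscale (- f t2 x) (cross (LA t1) (cross (LA t1) (LA t2)))).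
    set (N := let c := cross (LA t1) (LA t2) in vX c * vX c + vY c * vY c + vW c * vW c).
    assert (HN : 0 < N) by (apply cross_nz; auto).
    assert (fu1 : f t1 u = 0) by (unfold u; rewrite f_scale, f_dcross0; ring).
    assert (fu2 : f t2 u = f t2 x * N) by (unfold u; rewrite f_scale, f_dcross; unfold N; ring).
    assert (Hot : forall t, In t S -> t <> t1 -> t <> t2 -> 0 < f t p * f t x).
    { intros t Ht n1 n2. apply Hpos; auto. apply (gp_concur S t1 t2 t p); auto. }
    destruct (list_min_pos S (fun t => t <> t1 /\ t <> t2)
       (fun t => f t p * f t x / (Rabs (f t u * f t x) + 1))) as [eta [Heta Heta2]].
    { intros t Ht [n1 n2]. apply Rdiv_lt_0_compat; [apply Hot; auto|]. pose proof (Rabs_pos (f t u * f t x)); lra. }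
    exists (vadd p (vscale eta u)). split; auto. split; [exact Pt1|].
    assert (pos2 : 0 < f t2 (vadd p (vscale eta u)) * f t2 x).
    { rewrite f_lin, E2, fu2. pose proof (Hx t2 Ht2). assert (0 < f t2 x * f t2 x) by (apply Rsqr_pos_lt; auto).
      replace ((0 + eta * (f t2 x * N)) * f t2 x) with (eta * N * (f t2 x * f t2 x)) by ring.
      apply Rmult_lt_0_compat; auto. apply Rmult_lt_0_compat; auto. }
    assert (posall : forall t, In t S -> t <> t1 -> 0 < f t (vadd p (vscale eta u)) * f t x).
    { intros t Ht n1. destruct (classic (t = t2)) as [->|n2]; auto.
      rewrite f_lin. specialize (Heta2 t Ht (conj n1 n2)). specialize (Hot t Ht n1 n2).
      set (A := f t p * f t x) in *. set (B := f t u * f t x).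
      assert (0 < Rabs B + 1) by (pose proof (Rabs_pos B); lra).
      assert (eta * (Rabs B + 1) <= A).
      { apply (Rmult_le_compat_r (Rabs B + 1)) in Heta2; [|lra].
        fold B in Heta2. replace (A / (Rabs B + 1) * (Rabs B + 1)) with A in Heta2 by (field; lra). exact Heta2. }
      assert (- Rabs B <= B) by (pose proof (Rabs_Ropp B); pose proof (Rle_abs (- B)); lra).
      replace ((f t p + eta * f t u) * f t x) with (A + eta * B) by (unfold A, B; ring).
      nra. }
    repeat split.
    + apply (nz_of_f t2). intro Z; rewrite Z in pos2; lra.
    + rewrite f_lin, Hp1, fu1; ring.
    + intros t Ht n1 Z. specialize (posall t Ht n1). rewrite Z in posall; lra.
    + exists x. split.
      * split; [split; auto|]. exists 1; split; [left; auto|]. intros s Hs.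
        pose proof (Hx s Hs). assert (0 < f s x * f s x) by (apply Rsqr_pos_lt; auto). lra.
      * exists 1; split; [left; auto|]. intros t Ht n1. specialize (posall t Ht n1). lra.
  - exists p. split; auto. split; [exact Pt1|].
    assert (posall : forall t, In t S -> t <> t1 -> 0 < f t p * f t x).
    { intros t Ht n1. apply Hpos; auto. intro Z. apply NE. exists t; auto. }
    repeat split; auto.
    + intros t Ht n1 Z. specialize (posall t Ht n1). rewrite Z in posall; lra.
    + exists x. split.
      * split; [split; auto|]. exists 1; split; [left; auto|]. intros s Hs.
        pose proof (Hx s Hs). assert (0 < f s x * f s x) by (apply Rsqr_pos_lt; auto). lra.
      * exists 1; split; [left; auto|]. intros t Ht n1. specialize (posall t Ht n1). lra.
Qed.

Definition pattern a b w v := 0 < f a v * f b v /\ f a v * f w v < 0.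
Definition wcond a b w p := 0 < orient a p b * orient a p w /\ 0 < orient b p a * orient b p w.

Lemma prod_pos_of_nz A B : 0 <= A * B -> A <> 0 -> B <> 0 -> 0 < A * B.
Proof. intros H HA HB. destruct H as [|E]; auto. symmetry in E. apply Rmult_integral in E. destruct E; contradiction. Qed.

Lemma wit_cond S a b w p : general_position S -> exit_edge_witness S a b w ->
  In p S -> p <> a -> p <> b -> p <> w -> wcond a b w p.
Proof.
  intros G [Ha [Hb [Hw [nab [nbw [naw [N1 N2]]]]]]] Hp npa npb npw.
  split; apply prod_pos_of_nz.
  - apply Rnot_lt_le. intro L. apply N1. exists p. split; auto. split; auto.
  - apply G; auto.
  - apply G; auto.
  - apply Rnot_lt_le. intro L. apply N2. exists p. split; auto. split; auto.
  - apply G; auto.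
  - apply G; auto.
Qed.

Lemma signs3 fa fb fw u1 u2 u4 : 0 < fa*fb -> fa*fw < 0 -> 0 < u1*u2 -> 0 < -(u1*u4) ->
  0 < (fa*(-u4))*(fb*u2) /\ 0 < (fa*(-u4))*(fw*(-u1)).
Proof.
  intros H1 H2 H3 H4.
  assert (u1 <> 0) by (intro Z; subst; lra).
  assert (0 < u1 * u1) by (apply Rsqr_pos_lt; auto).
  assert (u2 * u4 < 0).
  { assert (0 < (u1*u2) * (-(u1*u4))) by (apply Rmult_lt_0_compat; auto).
    destruct (Rlt_or_le (u2*u4) 0); auto. nra. }
  split; nra.
Qed.

Lemma terms a b w p x : pattern a b w x -> wcond a b w p ->
  let T1 := f a x * orient b w p in let T2 := f b x * orient w a p in let T3 := f w x * orient a b p in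
  0 < T1 * T2 /\ 0 < T1 * T3 /\ orient a b w * f p x = T1 + T2 + T3.
Proof.
  intros [P1 P2] [W1 W2] T1 T2 T3.
  replace (orient b p a) with (- orient a p b) in W2 by (unfold orient; ring).
  destruct (signs3 (f a x) (f b x) (f w x) (orient a p b) (orient a p w) (orient b p w)) as [A B]; auto.
  { lra. }
  unfold T1, T2, T3.
  replace (orient b w p) with (- orient b p w) by (unfold orient; ring).
  replace (orient w a p) with (orient a p w) by (unfold orient; ring).
  replace (orient a b p) with (- orient a p b) by (unfold orient; ring).
  split; [|split]; auto.
  rewrite ident. unfold orient; ring.
Qed.

Lemma termpos_all a b w p x : pattern a b w x -> wcond a b w p ->
  0 < f w x * orient a b p * orient a b w * f p x /\
  0 < f b x * orient w a p * orient w a b * f p x /\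
  0 < f a x * orient b w p * orient b w a * f p x.
Proof.
  intros HP HW. pose proof (terms a b w p x HP HW) as TT. cbv zeta in TT. destruct TT as [A [B E]].
  set (T1 := f a x * orient b w p) in *. set (T2 := f b x * orient w a p) in *. set (T3 := f w x * orient a b p) in *.
  replace (orient w a b) with (orient a b w) by (unfold orient; ring).
  replace (orient b w a) with (orient a b w) by (unfold orient; ring).
  assert (T1 <> 0) by (intro Z; rewrite Z in A; lra).
  assert (0 < T1 * T1) by (apply Rsqr_pos_lt; auto).
  assert (0 < T2 * T3).
  { assert (0 < (T1*T2)*(T1*T3)) by (apply Rmult_lt_0_compat; auto). destruct (Rlt_or_le 0 (T2*T3)); auto. nra. }
  split; [|split].
  - rewrite Rmult_assoc, E. nra.
  - rewrite Rmult_assoc, E. nra.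
  - rewrite Rmult_assoc, E. nra.
Qed.

Lemma pattern_nonzero a b w p x : pattern a b w x -> wcond a b w p -> f p x <> 0.
Proof.
  intros HP HW Z. destruct (termpos_all a b w p x HP HW) as [A _]. rewrite Z in A. lra.
Qed.

Lemma pattern_transfer a b w x q e : pattern a b w x -> (e = 1 \/ e = -1) ->
  0 < e * f a q * f a x -> 0 < e * f b q * f b x -> 0 < e * f w q * f w x -> pattern a b w q.
Proof.
  intros [P1 P2] He Ha Hb Hw.
  assert (Hee : e * e = 1) by (destruct He as [-> | ->]; lra).
  split.
  - apply (pos_of_prod _ (f a x * f b x)); auto.
    replace (f a q * f b q * (f a x * f b x)) with ((e * f a q * f a x) * (e * f b q * f b x)) by (rewrite <- (Rmult_1_l (f a q * f b q * (f a x * f b x))), <- Hee; ring).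
    apply Rmult_lt_0_compat; auto.
  - assert (0 < - (f a q * f w q) * - (f a x * f w x)).
    { replace (- (f a q * f w q) * - (f a x * f w x)) with ((e * f a q * f a x) * (e * f w q * f w x)) by (rewrite <- (Rmult_1_l (- (f a q * f w q) * - (f a x * f w x))), <- Hee; ring).
      apply Rmult_lt_0_compat; auto. }
    assert (0 < - (f a q * f w q)) by (apply (pos_of_prod _ (- (f a x * f w x))); lra). lra.
Qed.

Lemma not_marked S C x a b w : (forall v, C v <-> cell_of S x v) -> In a S -> In w S -> pattern a b w x -> ~ marked C.
Proof.
  intros E Ha Hw [P1 P2] M. apply E in M. destruct M as [_ [e [He H]]].
  pose proof (H a Ha) as A. pose proof (H w Hw) as W.
  assert (Hm : forall s, f s (V3 0 1 0) = -1) by (intro s; unfold dual_form; simpl; ring).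
  rewrite Hm in A, W.
  destruct He as [-> | ->].
  - assert (f a x < 0) by lra. assert (f w x < 0) by lra. nra.
  - assert (f a x > 0) by lra. assert (f w x > 0) by lra. nra.
Qed.

Lemma cell_self S x : off_lines S x -> cell_of S x x.
Proof.
  intros [xn Hx]. split; [split; auto|]. exists 1; split; [left; auto|]. intros s Hs.
  pose proof (Hx s Hs). assert (0 < f s x * f s x) by (apply Rsqr_pos_lt; auto). lra.
Qed.

Lemma small_pert A B eta : 0 < A -> 0 < eta -> eta <= A / (Rabs B + 1) -> 0 < A + eta * B.
Proof.
  intros HA He H.
  assert (0 < Rabs B + 1) by (pose proof (Rabs_pos B); lra).
  apply (Rmult_le_compat_r (Rabs B + 1)) in H; [|lra].
  replace (A / (Rabs B + 1) * (Rabs B + 1)) with A in H by (field; lra).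
  assert (- Rabs B <= B) by (pose proof (Rabs_Ropp B); pose proof (Rle_abs (- B)); lra).
  nra.
Qed.

Lemma small_h A B h0 : A <> 0 -> 0 < h0 -> exists h, 0 < h < h0 /\ 0 < (A + h * B) * A.
Proof.
  intros HA H0. assert (0 < A * A) by (apply Rsqr_pos_lt; auto).
  destruct (Rle_or_lt 0 (A * B)) as [P|N].
  - exists (h0 / 2). split; [lra|]. nra.
  - set (h := Rmin (h0 / 2) (A * A / (2 * - (A * B)))).
    assert (0 < A * A / (2 * - (A * B))) by (apply Rdiv_lt_0_compat; lra).
    assert (h1 : h <= A * A / (2 * - (A * B))) by apply Rmin_r.
    assert (h2 : h <= h0 / 2) by apply Rmin_l.
    assert (0 < h) by (apply Rmin_pos; lra).
    exists h. split; [lra|].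
    assert (h * (- (A * B)) <= A * A / 2).
    { apply (Rmult_le_compat_r (2 * - (A * B))) in h1; [|lra].
      replace (A * A / (2 * - (A * B)) * (2 * - (A * B))) with (A * A) in h1 by (field; split; [intro Z; rewrite Z in N; lra | exact HA]). lra. }
    nra.
Qed.

Lemma vtx_exists S x s r m : general_position S -> In s S -> In r S -> In m S ->
  s <> r -> r <> m -> s <> m -> off_lines S x ->
  (forall p, In p S -> p <> s -> p <> r -> p <> m -> 0 < f m x * orient s r p * orient s r m * f p x) ->
  exists v, v <> vzero /\ f s v = 0 /\ f r v = 0 /\ 0 < f m v * f m x /\
    forall p, In p S -> p <> s -> p <> r -> p <> m -> 0 < f p v * f p x.
Proof.
  intros G Hs Hr Hm nsr nrm nsm [xn Hx] H.
  set (Cc := cross (LA s) (LA r)).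
  set (v := vscale (f m x * f m Cc) Cc).
  assert (Z : orient s r m <> 0) by (apply G; auto).
  assert (fmC : f m Cc = - orient s r m) by (unfold Cc; apply f_cross).
  assert (fmv : f m v = f m x * f m Cc * f m Cc) by (unfold v; rewrite f_scale; ring).
  assert (Hmx := Hx m Hm).
  assert (Pm : 0 < f m v * f m x).
  { rewrite fmv. assert (f m Cc <> 0) by (rewrite fmC; intro; apply Z; lra).
    assert (0 < f m x * f m x) by (apply Rsqr_pos_lt; auto).
    assert (0 < f m Cc * f m Cc) by (apply Rsqr_pos_lt; auto).
    replace (f m x * f m Cc * f m Cc * f m x) with ((f m x * f m x) * (f m Cc * f m Cc)) by ring.
    apply Rmult_lt_0_compat; auto. }
  assert (fsv : f s v = 0) by (unfold v, Cc; rewrite f_scale, (f_cross s r s); unfold orient; ring).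
  assert (frv : f r v = 0) by (unfold v, Cc; rewrite f_scale, (f_cross s r r); unfold orient; ring).
  exists v. split; [apply (nz_of_f m); intro E; rewrite E in Pm; lra|].
  split; auto. split; auto. split; auto.
  intros p Hp n1 n2 n3. specialize (H p Hp n1 n2 n3).
  pose proof (ident s r m p v) as I. rewrite fsv, frv in I.
  assert (0 < (f m x * orient s r m) * (f m x * orient s r m)) by (apply Rsqr_pos_lt; apply Rmult_integral_contrapositive; split; auto).
  apply (pos_of_prod _ ((f m x * orient s r m) * (f m x * orient s r m))); auto.
  replace (f p v * f p x * (f m x * orient s r m * (f m x * orient s r m))) with ((orient s r m * f p v) * (f m x * orient s r m * f p x * f m x)) by ring.
  rewrite I.
  replace ((0 * orient r m p + 0 * orient m s p + f m v * orient s r p) * (f m x * orient s r m * f p x * f m x)) with ((f m v * f m x) * (f m x * orient s r p * orient s r m * f p x)) by ring.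
  apply Rmult_lt_0_compat; auto.
Qed.

Lemma vertex_side S x s r m v : general_position S -> off_lines S x -> In s S -> In r S -> In m S ->
  s <> r -> r <> m -> s <> m ->
  f s v = 0 -> f r v = 0 -> 0 < f m v * f m x ->
  (forall p, In p S -> p <> s -> p <> r -> p <> m -> 0 < f p v * f p x) ->
  side_leaves S (cell_of S x) s v (vscale (f r x * f r (cross (LA s) (LA m))) (cross (LA s) (LA m))).
Proof.
  intros G [xn Hx] Hs Hr Hm nsr nrm nsm fsv frv Pm Po.
  set (Cc := cross (LA s) (LA m)).
  set (t := vscale (f r x * f r Cc) Cc).
  assert (fst0 : f s t = 0) by (unfold t, Cc; rewrite f_scale, (f_cross s m s); unfold orient; ring).
  assert (fmt : f m t = 0) by (unfold t, Cc; rewrite f_scale, (f_cross s m m); unfold orient; ring).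
  assert (frC : f r Cc <> 0) by (unfold Cc; rewrite f_cross; intro E; apply (G s m r); auto; lra).
  assert (Prt : 0 < f r t * f r x).
  { unfold t. rewrite f_scale. assert (Hrx := Hx r Hr).
    assert (0 < f r x * f r x) by (apply Rsqr_pos_lt; auto).
    assert (0 < f r Cc * f r Cc) by (apply Rsqr_pos_lt; auto).
    replace (f r x * f r Cc * f r Cc * f r x) with ((f r x * f r x) * (f r Cc * f r Cc)) by ring.
    apply Rmult_lt_0_compat; auto. }
  split; auto.
  destruct (list_min_pos S (fun p => p <> s /\ p <> r /\ p <> m)
     (fun p => f p v * f p x / (Rabs (f p t * f p x) + 1))) as [h0 [Hh0 Hh0']].
  { intros p Hp [n1 [n2 n3]]. apply Rdiv_lt_0_compat; [apply Po; auto|]. pose proof (Rabs_pos (f p t * f p x)); lra. }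
  exists h0. split; auto. intros h [hp hl].
  set (q := vadd v (vscale h t)).
  assert (posall : forall p, In p S -> p <> s -> 0 < f p q * f p x).
  { intros p Hp n1. unfold q; rewrite f_lin.
    destruct (classic (p = r)) as [->|n2].
    - rewrite frv. replace ((0 + h * f r t) * f r x) with (h * (f r t * f r x)) by ring. apply Rmult_lt_0_compat; auto.
    - destruct (classic (p = m)) as [->|n3].
      + rewrite fmt. replace (f m v + h * 0) with (f m v) by ring. auto.
      + replace ((f p v + h * f p t) * f p x) with (f p v * f p x + h * (f p t * f p x)) by ring.
        apply small_pert; auto. specialize (Hh0' p Hp (conj n1 (conj n2 n3))). lra. }
  repeat split.
  - apply (nz_of_f m). intro E. specialize (posall m Hm (not_eq_sym nsm)). rewrite E in posall; lra.
  - unfold q; rewrite f_lin, fsv, fst0; ring.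
  - intros p Hp n1 E. specialize (posall p Hp n1). rewrite E in posall; lra.
  - exists x. split; [apply cell_self; split; auto|]. exists 1; split; [left; auto|].
    intros p Hp n1. specialize (posall p Hp n1). lra.
Qed.

Lemma side_leaves_is_side S C s v t : In s S -> side_leaves S C s v t -> is_side S C s.
Proof.
  intros Hs [_ [h0 [H0 H]]]. split; auto. exists (vadd v (vscale (h0/2) t)). apply H. lra.
Qed.

Lemma side_leaves_ext S C C' s v t : (forall v, C v <-> C' v) -> side_leaves S C s v t -> side_leaves S C' s v t.
Proof.
  intros E [H1 [h0 [H0 H]]]. split; auto. exists h0; split; auto. intros h Hh. apply (edge_ext S C); auto.
Qed.

Lemma br_scale k c t : br (vscale k c) t = k * br c t.
Proof. destruct c, t; unfold br; simpl; ring. Qed.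

Lemma sideinfo S C x s r m v t : general_position S -> (forall v, C v <-> cell_of S x v) ->
  In s S -> In r S -> In m S -> s <> r -> r <> m -> s <> m ->
  v <> vzero -> f s v = 0 -> f r v = 0 -> side_leaves S C s v t ->
  br v t * f r x * f m x * orient s r m < 0.
Proof.
  intros G E Hs Hr Hm nsr nrm nsm vn fsv frv [fst0 [h0 [H0 Hed]]].
  destruct (vertex_param s r v nsr fsv frv) as [k Hk].
  assert (Z : orient s r m <> 0) by (apply G; auto).
  assert (fmv : f m v = k * - orient s r m) by (rewrite Hk, f_scale, f_cross; ring).
  assert (kn : k <> 0) by (intro K; apply vn; rewrite Hk, K; unfold vscale, vzero; f_equal; ring).
  assert (fmvn : f m v <> 0) by (rewrite fmv; apply Rmult_integral_contrapositive; split; auto; intro; apply Z; lra).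
  destruct (small_h (f m v) (f m t) h0 fmvn H0) as [h [Hh Hpos]].
  specialize (Hed h Hh).
  destruct (edge_rel S C s _ x Hed E) as [e [He Hr']].
  pose proof (Hr' r Hr (not_eq_sym nsr)) as R1. pose proof (Hr' m Hm (not_eq_sym nsm)) as R2.
  rewrite f_lin, frv in R1. rewrite f_lin in R2.
  assert (Hee : e * e = 1) by (destruct He as [-> | ->]; lra).
  assert (A1 : 0 < h * (f r t * f r x * ((f m v + h * f m t) * f m x))).
  { replace (h * (f r t * f r x * ((f m v + h * f m t) * f m x))) with ((e * (0 + h * f r t) * f r x) * (e * (f m v + h * f m t) * f m x)) by (rewrite <- (Rmult_1_l (h * (f r t * f r x * ((f m v + h * f m t) * f m x)))), <- Hee; ring).
    apply Rmult_lt_0_compat; auto. }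
  assert (A2 : 0 < f r t * f r x * ((f m v + h * f m t) * f m x)) by (apply (pos_of_prod _ h); [rewrite Rmult_comm|]; lra).
  assert (A3 : 0 < f r t * f r x * f m v * f m x).
  { apply (pos_of_prod _ ((f m v + h * f m t) * f m v)); auto.
    replace (f r t * f r x * f m v * f m x * ((f m v + h * f m t) * f m v)) with ((f r t * f r x * ((f m v + h * f m t) * f m x)) * (f m v * f m v)) by ring.
    apply Rmult_lt_0_compat; auto. apply Rsqr_pos_lt; auto. }
  assert (brE : br v t = k * f r t) by (rewrite Hk, br_scale, br_cross, fst0; ring).
  rewrite brE. rewrite fmv in A3.
  assert (0 < k * k) by (apply Rsqr_pos_lt; auto).
  nra.
Qed.

Lemma f_add2 s m u n t : f s (vadd (vscale m u) (vscale n t)) = m * f s u + n * f s t.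
Proof. destruct s, u, t; unfold dual_form; simpl; ring. Qed.

Lemma aux1 E D : 0 < E -> 0 < - D -> 0 < E / (2 * - D) * D + E.
Proof. intros. replace (E / (2 * - D) * D) with (- E / 2) by (field; lra). lra. Qed.
Lemma aux2 E D : 0 < - E -> 0 < D -> 0 < 2 * - E / D * D + E.
Proof. intros. replace (2 * - E / D * D) with (2 * - E) by (field; lra). lra. Qed.

Lemma exists_y a b w w' x : f a x <> 0 -> f b x <> 0 -> f w x <> 0 -> ~ pattern a b w x -> wcond a b w w' ->
  exists y, f w' y = 0 /\ 0 < f a y * f a x /\ 0 < f b y * f b x /\ 0 < f w y * f w x.
Proof.
  intros na nb nw NP [W1 W2].
  set (Pa := cross (LA a) (LA w')). set (Pb := cross (LA b) (LA w')).
  set (p1 := f b Pa). set (p2 := f w Pa). set (q1 := f a Pb). set (q2 := f w Pb).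
  assert (HP : 0 < p1 * p2) by (unfold p1, p2, Pa; rewrite !f_cross; lra).
  assert (HQ : 0 < q1 * q2) by (unfold q1, q2, Pb; rewrite !f_cross; lra).
  assert (p1n : p1 <> 0) by (intro Z; rewrite Z in HP; lra).
  assert (q1n : q1 <> 0) by (intro Z; rewrite Z in HQ; lra).
  assert (faPa : f a Pa = 0) by (unfold Pa; rewrite f_cross; unfold orient; ring).
  assert (fbPb : f b Pb = 0) by (unfold Pb; rewrite f_cross; unfold orient; ring).
  assert (fw'Pa : f w' Pa = 0) by (unfold Pa; rewrite f_cross; unfold orient; ring).
  assert (fw'Pb : f w' Pb = 0) by (unfold Pb; rewrite f_cross; unfold orient; ring).
  set (xa := f a x) in *. set (xb := f b x) in *. set (xw := f w x) in *.
  assert (Main : forall K, 0 < K -> 0 < K * (xb * xw * (p1 * p2)) + xa * xw * (q1 * q2) ->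
    exists y, f w' y = 0 /\ 0 < f a y * xa /\ 0 < f b y * xb /\ 0 < f w y * xw).
  { intros K HK HW. exists (vadd (vscale (K * xb * p1) Pa) (vscale (xa * q1) Pb)).
    rewrite !f_add2. fold p1 p2 q1 q2. rewrite faPa, fbPb, fw'Pa, fw'Pb.
    assert (0 < xa * xa) by (apply Rsqr_pos_lt; auto).
    assert (0 < xb * xb) by (apply Rsqr_pos_lt; auto).
    assert (0 < q1 * q1) by (apply Rsqr_pos_lt; auto).
    assert (0 < p1 * p1) by (apply Rsqr_pos_lt; auto).
    split; [ring|]. split; [|split].
    - replace ((K * xb * p1 * 0 + xa * q1 * q1) * xa) with ((xa * xa) * (q1 * q1)) by ring. apply Rmult_lt_0_compat; auto.
    - replace ((K * xb * p1 * p1 + xa * q1 * 0) * xb) with (K * ((xb * xb) * (p1 * p1))) by ring.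
      apply Rmult_lt_0_compat; auto. apply Rmult_lt_0_compat; auto.
    - replace ((K * xb * p1 * p2 + xa * q1 * q2) * xw) with (K * (xb * xw * (p1 * p2)) + xa * xw * (q1 * q2)) by ring. auto. }
  assert (0 < xw * xw) by (apply Rsqr_pos_lt; auto).
  destruct (Rlt_or_le 0 (xa * xw)) as [Aw|Aw]; destruct (Rlt_or_le 0 (xb * xw)) as [Bw|Bw].
  - apply (Main 1); [lra|]. assert (0 < xb * xw * (p1 * p2)) by (apply Rmult_lt_0_compat; auto).
    assert (0 < xa * xw * (q1 * q2)) by (apply Rmult_lt_0_compat; auto). lra.
  - assert (Bw' : xb * xw < 0).
    { destruct Bw as [|E]; auto. exfalso. apply Rmult_integral in E. destruct E; contradiction. }
    set (K := xa * xw * (q1 * q2) / (2 * (- (xb * xw * (p1 * p2))))).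
    assert (0 < xa * xw * (q1 * q2)) by (apply Rmult_lt_0_compat; auto).
    assert (0 < - (xb * xw * (p1 * p2))).
    { assert (0 < (- (xb * xw)) * (p1 * p2)) by (apply Rmult_lt_0_compat; lra). lra. }
    apply (Main K).
    + unfold K. apply Rdiv_lt_0_compat; lra.
    + unfold K. apply aux1; auto.
  - assert (Aw' : xa * xw < 0).
    { destruct Aw as [|E]; auto. exfalso. apply Rmult_integral in E. destruct E; contradiction. }
    set (K := 2 * (- (xa * xw * (q1 * q2))) / (xb * xw * (p1 * p2))).
    assert (0 < - (xa * xw * (q1 * q2))).
    { assert (0 < (- (xa * xw)) * (q1 * q2)) by (apply Rmult_lt_0_compat; lra). lra. }
    assert (0 < xb * xw * (p1 * p2)) by (apply Rmult_lt_0_compat; auto).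
    apply (Main K).
    + unfold K. apply Rdiv_lt_0_compat; lra.
    + unfold K. apply aux2; auto.
  - exfalso. apply NP. unfold pattern. fold xa xb xw.
    assert (Aw' : xa * xw < 0).
    { destruct Aw as [|E]; auto. exfalso. apply Rmult_integral in E. destruct E; contradiction. }
    assert (Bw' : xb * xw < 0).
    { destruct Bw as [|E]; auto. exfalso. apply Rmult_integral in E. destruct E; contradiction. }
    split; auto.
    apply (pos_of_prod _ (xw * xw)); auto.
    replace (xa * xb * (xw * xw)) with ((- (xa * xw)) * (- (xb * xw))) by ring.
    apply Rmult_lt_0_compat; lra.
Qed.

Lemma forced S C x a b w w' : general_position S -> exit_edge_witness S a b w ->
  In w' S -> w' <> a -> w' <> b -> w' <> w -> off_lines S x ->
  (forall v, C v <-> cell_of S x v) ->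
  (forall s, is_side S C s -> s = a \/ s = b \/ s = w) -> pattern a b w x.
Proof.
  intros G Ex Hw' n1 n2 n3 [xn Hx] E Sides.
  pose proof Ex as [Ha [Hb [Hw [nab [nbw [naw _]]]]]].
  apply NNPP; intro NP.
  destruct (exists_y a b w w' x) as [y [Y0 [Ya [Yb Yw]]]]; auto.
  { apply (wit_cond S); auto. }
  destruct (crossing S x y a w') as [t1 [q [Ht1 [Pt1 Eq]]]]; auto.
  { split; auto. }
  { lra. }
  { rewrite Y0; lra. }
  assert (is_side S C t1).
  { split; auto. exists q. apply (edge_ext S (cell_of S x)); auto. intro v; split; apply E. }
  destruct (Sides t1 H) as [-> | [-> | ->]]; lra.
Qed.

Lemma fneg_prod A B Cc : 0 < A * B -> A * Cc < 0 -> B * Cc < 0.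
Proof.
  intros H1 H2. assert (A <> 0) by (intro Z; subst; lra).
  assert (0 < A * A) by (apply Rsqr_pos_lt; auto).
  assert ((A * B) * (A * Cc) < 0) by (apply Rmult_pos_neg; auto).
  destruct (Rlt_or_le (B * Cc) 0); auto. nra.
Qed.

Lemma exit_of_pattern S C x a b w : general_position S -> exit_edge_witness S a b w ->
  off_lines S x -> (forall v, C v <-> cell_of S x v) -> pattern a b w x ->
  triangular_cell S C a b w -> exit_vertex_is S C a b.
Proof.
  intros G Ex Xo E HP Tri.
  pose proof Ex as [Ha [Hb [Hw [nab [nbw [naw _]]]]]].
  assert (WC : forall p, In p S -> p <> a -> p <> b -> p <> w -> wcond a b w p) by (intros; apply (wit_cond S); auto).
  destruct HP as [P1 P2].
  assert (P3 : f b x * f w x < 0) by (apply (fneg_prod (f a x)); auto).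
  assert (E' : forall v, cell_of S x v <-> C v) by (intro v; split; apply E).
  exists w. split; auto. split; [|split].
  - destruct (vtx_exists S x a b w) as [v [vn [fav [fbv [Pm Po]]]]]; auto.
    { intros p Hp n1 n2 n3. apply (termpos_all a b w p x); [split; auto|]. apply WC; auto. }
    pose proof (vertex_side S x a b w v G Xo Ha Hb Hw nab nbw naw fav fbv Pm Po) as SA.
    assert (SB := vertex_side S x b a w v G Xo Hb Ha Hw (not_eq_sym nab) (naw) nbw fbv fav Pm
                   (fun p Hp n1 n2 n3 => Po p Hp n2 n1 n3)).
    apply (side_leaves_ext S _ C) in SA; auto. apply (side_leaves_ext S _ C) in SB; auto.
    pose proof (sideinfo S C x a b w v _ G E Ha Hb Hw nab nbw naw vn fav fbv SA) as IA.
    pose proof (sideinfo S C x b a w v _ G E Hb Ha Hw (not_eq_sym nab) naw nbw vn fbv fav SB) as IB.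
    replace (orient b a w) with (- orient a b w) in IB by (unfold orient; ring).
    assert (Z : orient a b w <> 0) by (apply G; auto).
    exists v. split; auto. split; auto. split; auto.
    set (ta := vscale (f b x * f b (cross (LA a) (LA w))) (cross (LA a) (LA w))) in *.
    set (tb := vscale (f a x * f a (cross (LA b) (LA w))) (cross (LA b) (LA w))) in *.
    set (O := orient a b w) in *. set (Ba := br v ta) in *. set (Bb := br v tb) in *.
    assert (0 < Ba * O) by (apply (pos_of_prod _ (- (f b x * f w x))); [|lra]; nra).
    assert (0 < - (Bb * O)).
    { apply (pos_of_prod _ (- (f a x * f w x))); [|lra]. nra. }
    destruct (Rlt_or_le 0 O) as [Op|On].
    + right. split.
      * exists ta. split; auto. unfold x_increasing. fold (br v ta). fold Ba. nra.
      * exists tb. split; auto. unfold x_decreasing. fold (br v tb). fold Bb. nra.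
    + assert (O < 0) by (destruct On; auto; contradiction). left. split.
      * exists ta. split; auto. unfold x_decreasing. fold (br v ta). fold Ba. nra.
      * exists tb. split; auto. unfold x_increasing. fold (br v tb). fold Bb. nra.
  - intros [v [vn [fav [fwv D]]]].
    assert (SI : forall t, side_leaves S C a v t -> br v t * f w x * f b x * orient a w b < 0).
    { intros t St. apply (sideinfo S C x a w b v t); auto. }
    assert (SW : forall t, side_leaves S C w v t -> br v t * f a x * f b x * orient w a b < 0).
    { intros t St. apply (sideinfo S C x w a b v t); auto. }
    replace (orient w a b) with (- orient a w b) in SW by (unfold orient; ring).
    set (O := orient a w b) in *.
    assert (KA : forall t, side_leaves S C a v t -> 0 < br v t * O).
    { intros t St. specialize (SI t St). apply (pos_of_prod _ (- (f w x * f b x))); [|lra]. nra. }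
    assert (KW : forall t, side_leaves S C w v t -> 0 < br v t * O).
    { intros t St. specialize (SW t St). apply (pos_of_prod _ (f a x * f b x)); auto. nra. }
    unfold side_in, side_out, x_increasing, x_decreasing in D.
    destruct D as [[[t1 [S1 X1]] [t2 [S2 X2]]]|[[t1 [S1 X1]] [t2 [S2 X2]]]];
      specialize (KA t1 S1); specialize (KW t2 S2); unfold br in KA, KW; nra.
  - intros [v [vn [fbv [fwv D]]]].
    assert (SI : forall t, side_leaves S C b v t -> br v t * f w x * f a x * orient b w a < 0).
    { intros t St. apply (sideinfo S C x b w a v t); auto. }
    assert (SW : forall t, side_leaves S C w v t -> br v t * f b x * f a x * orient w b a < 0).
    { intros t St. apply (sideinfo S C x w b a v t); auto. }
    replace (orient w b a) with (- orient b w a) in SW by (unfold orient; ring).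
    set (O := orient b w a) in *.
    assert (KA : forall t, side_leaves S C b v t -> 0 < br v t * O).
    { intros t St. specialize (SI t St). apply (pos_of_prod _ (- (f w x * f a x))); [|lra]. nra. }
    assert (KW : forall t, side_leaves S C w v t -> 0 < br v t * O).
    { intros t St. specialize (SW t St). apply (pos_of_prod _ (f b x * f a x)); [|nra]. nra. }
    unfold side_in, side_out, x_increasing, x_decreasing in D.
    destruct D as [[[t1 [S1 X1]] [t2 [S2 X2]]]|[[t1 [S1 X1]] [t2 [S2 X2]]]];
      specialize (KA t1 S1); specialize (KW t2 S2); unfold br in KA, KW; nra.
Qed.

Lemma our_cell S a b w : general_position S -> exit_edge_witness S a b w ->
  exists x, off_lines S x /\ pattern a b w x /\ triangular_cell S (cell_of S x) a b w.
Proof.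
  intros G Ex. pose proof Ex as [Ha [Hb [Hw [nab [nbw [naw _]]]]]].
  assert (WC : forall p, In p S -> p <> a -> p <> b -> p <> w -> wcond a b w p) by (intros; apply (wit_cond S); auto).
  assert (Z : orient a b w <> 0) by (apply G; auto).
  set (x := vadd (vadd (cross (LA b) (LA w)) (cross (LA w) (LA a))) (vscale (-1) (cross (LA a) (LA b)))).
  assert (fx : forall s, f s x = - orient b w s - orient w a s + orient a b s).
  { intro s. unfold x. destruct s, a, b, w; unfold dual_form, orient; simpl; ring. }
  assert (fa : f a x = - orient a b w) by (rewrite fx; unfold orient; ring).
  assert (fb : f b x = - orient a b w) by (rewrite fx; unfold orient; ring).
  assert (fw : f w x = orient a b w) by (rewrite fx; unfold orient; ring).
  assert (HP : pattern a b w x).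
  { assert (0 < orient a b w * orient a b w) by (apply Rsqr_pos_lt; auto).
    split; rewrite ?fa, ?fb, ?fw; nra. }
  assert (Xo : off_lines S x).
  { split.
    - apply (nz_of_f a). rewrite fa. intro; apply Z; lra.
    - intros s Hs. destruct (classic (s = a)) as [->|n1]; [rewrite fa; intro; apply Z; lra|].
      destruct (classic (s = b)) as [->|n2]; [rewrite fb; intro; apply Z; lra|].
      destruct (classic (s = w)) as [->|n3]; [rewrite fw; auto|].
      apply (pattern_nonzero a b w s x); auto. }
  destruct HP as [P1 P2].
  assert (P3 : f b x * f w x < 0) by (apply (fneg_prod (f a x)); auto).
  exists x. split; auto. split; [split; auto|].
  split; [exists x; split; auto; intro; tauto|]. split; auto. split; auto. split; auto.
  intro s. split.
  - intros [Hs [q Hq]]. apply NNPP; intro N.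
    assert (n1 : s <> a) by tauto. assert (n2 : s <> b) by tauto. assert (n3 : s <> w) by tauto.
    destruct (edge_rel S (cell_of S x) s q x Hq (fun v => conj (fun h => h) (fun h => h))) as [e [He Hpos]].
    assert (Pq : pattern a b w q).
    { apply (pattern_transfer a b w x q e); [split; auto | exact He | apply Hpos; auto ..]. }
    destruct Hq as [_ [Fq _]]. apply (pattern_nonzero a b w s q Pq (WC s Hs n1 n2 n3)); auto.
  - intros [-> | [-> | ->]].
    + destruct (vtx_exists S x a b w) as [v [vn [fav [fbv [Pm Po]]]]]; auto.
      { intros p Hp n1 n2 n3. apply (termpos_all a b w p x); [split; auto|]. apply WC; auto. }
      eapply side_leaves_is_side; auto. apply (vertex_side S x a b w v); eauto.
    + destruct (vtx_exists S x a b w) as [v [vn [fav [fbv [Pm Po]]]]]; auto.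
      { intros p Hp n1 n2 n3. apply (termpos_all a b w p x); [split; auto|]. apply WC; auto. }
      eapply side_leaves_is_side; auto. apply (vertex_side S x b a w v); auto.
    + destruct (vtx_exists S x w a b) as [v [vn [fwv [fav [Pm Po]]]]]; auto.
      { intros p Hp n1 n2 n3. apply (termpos_all a b w p x); [split; auto|]. apply WC; auto. }
      eapply side_leaves_is_side; auto. apply (vertex_side S x w a b v); auto.
Qed.

Theorem mainTheorem9 (S : list point) (a b c d : point) :
  NoDup S ->
  general_position S ->
  exit_edge_witness S a b c ->
  exit_edge_witness S a b d ->
  c <> d ->
  (forall w, (w = c \/ w = d) ->
     exists C, triangular_cell S C a b w /\ ~ marked C) /\
  (forall w C, (w = c \/ w = d) ->
     triangular_cell S C a b w -> ~ marked C -> exit_vertex_is S C a b) /\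
  (exists C1 C2, triangular_cell S C1 a b c /\ triangular_cell S C2 a b d /\
     hourglass S C1 C2).
Proof.
  intros ND G Exc Exd ncd.
  pose proof Exc as [Ha [Hb [Hc [nab [nbc [nac _]]]]]].
  pose proof Exd as [_ [_ [Hd [_ [nbd [nad _]]]]]].
  assert (refl : forall x v, cell_of S x v <-> cell_of S x v) by tauto.
  assert (Claim2 : forall w w' C, exit_edge_witness S a b w -> In w' S -> w' <> a -> w' <> b -> w' <> w ->
     triangular_cell S C a b w -> exit_vertex_is S C a b).
  { intros w w' C Ex Hw' n1 n2 n3 Tri.
    pose proof Tri as [[x [Xo E]] [_ [_ [_ Sd]]]].
    assert (HP : pattern a b w x).
    { apply (forced S C x a b w w'); auto. intros s Hs; apply Sd; auto. }
    apply (exit_of_pattern S C x a b w); auto. }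
  split; [|split].
  - intros w Hw.
    assert (Ex : exit_edge_witness S a b w) by (destruct Hw as [-> | ->]; auto).
    destruct (our_cell S a b w G Ex) as [x [Xo [HP Tri]]].
    exists (cell_of S x). split; auto.
    apply (not_marked S _ x a b w); auto. destruct Hw as [-> | ->]; auto.
  - intros w C [-> | ->] Tri _.
    + apply (Claim2 c d C); auto.
    + apply (Claim2 d c C); auto.
  - destruct (our_cell S a b c G Exc) as [xc [Xc [HPc Tc]]].
    destruct (our_cell S a b d G Exd) as [xd [Xd [HPd Td]]].
    exists (cell_of S xc), (cell_of S xd). split; auto. split; auto.
    split; [|split; [|split]].
    + exists xc. intros [H1 _]. specialize (H1 (cell_self S xc Xc)).
      destruct H1 as [_ [e [He Hp]]].
      pose proof (Hp a Ha) as A. pose proof (Hp d Hd) as D.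
      assert (Wd : wcond a b d c) by (apply (wit_cond S); auto).
      assert (Wc : wcond a b c d) by (apply (wit_cond S); auto).
      destruct (termpos_all a b c d xc HPc Wc) as [_ [_ T3]].
      destruct Wd as [_ W2].
      assert (Q1 : 0 < f a xc * f d xc).
      { apply (pos_of_prod _ (orient b c d * orient b c a)); [|lra].
        replace (f a xc * f d xc * (orient b c d * orient b c a)) with (f a xc * orient b c d * orient b c a * f d xc) by ring. auto. }
      destruct HPd as [_ Q2].
      assert (Hee : e * e = 1) by (destruct He as [-> | ->]; lra).
      assert (0 < (e * f a xc * f a xd) * (e * f d xc * f d xd)) by (apply Rmult_lt_0_compat; auto).
      replace ((e * f a xc * f a xd) * (e * f d xc * f d xd)) with ((e * e) * ((f a xc * f d xc) * (f a xd * f d xd))) in H by ring.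
      rewrite Hee in H. assert ((f a xc * f d xc) * (f a xd * f d xd) < 0) by (apply Rmult_pos_neg; auto). lra.
    + apply (not_marked S _ xc a b c); auto.
    + apply (not_marked S _ xd a b d); auto.
    + exists a, b. split; auto. split; auto. split; auto. split.
      * apply (exit_of_pattern S _ xc a b c); auto.
      * apply (exit_of_pattern S _ xd a b d); auto.
Qed.
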